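(* Let $\mathfrak{p}$ be a finitely generated proper prime ideal of $\mathcal{S}'(\mathbb{Z}^{d})$. Then there exists $\mathbf{n}_*\in\mathbb{Z}^d$ such that $\mathfrak{p}=\{f\in\mathcal{S}'(\mathbb{Z}^{d}): f(\mathbf{n}_* )=0\}$.
   Context: For $\mathbf{n}=(n_1,\dots,n_d)\in\mathbb{Z}^d$ write $\|\mathbf{n}\|:=|n_1|+\cdots+|n_d|$. $\mathcal{S}'(\mathbb{Z}^{d})$ denotes the set of all maps $f:\mathbb{Z}^d\to\mathbb{C}$ of at most polynomial growth, i.e. for which there exist a real $M>0$ and an integer $m\geq 0$ with $|f(\mathbf{n})|\leq M(1+\|\mathbf{n}\|)^m$ for all $\mathbf{n}\in\mathbb{Z}^d$. It is a commutative unital ring under pointwise addition and multiplication, with unit the constant function $1$. *)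

(* Defs.v *)
From HB Require Import structures.
From mathcomp Require Import all_boot all_order all_algebra.
From mathcomp Require Import complex.
From mathcomp Require Import Rstruct.
Set Implicit Arguments. Unset Strict Implicit. Unset Printing Implicit Defensive.
Import Order.TTheory GRing.Theory Num.Theory.
Local Open Scope ring_scope.

Definition CC := complex.complex Rdefinitions.R.

Definition Zd (d : nat) := {ffun 'I_d -> int}.

Definition l1norm (d : nat) (n : Zd d) : nat := (\sum_(i < d) `|n i|%N)%N.

(* f has at most polynomial growth: f in S'(Z^d) *)
Definition tempered (d : nat) (f : Zd d -> CC) : Prop :=
  exists (M : Rdefinitions.R) (m : nat), 0 < M /\
    forall n : Zd d, `|f n| <= ((M * (1 + (l1norm n)%:R) ^+ m : Rdefinitions.R)%:C)%C.

Definition is_ideal (d : nat) (P : (Zd d -> CC) -> Prop) : Prop :=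
  [/\ forall f, P f -> tempered f,
      P (fun _ => 0),
      forall f g, P f -> P g -> P (fun n => f n + g n)
    & forall a f, tempered a -> P f -> P (fun n => a n * f n)].

Definition is_proper_ideal (d : nat) (P : (Zd d -> CC) -> Prop) : Prop :=
  is_ideal P /\ ~ P (fun _ => 1).

Definition is_prime_ideal (d : nat) (P : (Zd d -> CC) -> Prop) : Prop :=
  is_proper_ideal P /\
  forall f g, tempered f -> tempered g -> P (fun n => f n * g n) -> P f \/ P g.

Definition finitely_generated (d : nat) (P : (Zd d -> CC) -> Prop) : Prop :=
  exists gs : seq (Zd d -> CC),
    (forall g, List.In g gs -> P g) /\
    forall f, P f -> exists as_ : seq (Zd d -> CC),
      size as_ = size gs /\ (forall a, List.In a as_ -> tempered a) /\
      forall n, f n = \sum_(i < size gs) nth (fun _ => 0) as_ i n * nth (fun _ => 0) gs i n.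

(* Main.v *)
Require Import Defs.
From HB Require Import structures.
From mathcomp Require Import all_boot all_order all_algebra.
From mathcomp Require Import complex Rstruct.
From mathcomp Require Import ring lra.
From Stdlib Require Import Classical FunctionalExtensionality.
Import Order.TTheory GRing.Theory Num.Theory.
Import ComplexField.Normc.
Local Open Scope ring_scope.
Local Open Scope complex_scope.
Set Implicit Arguments.
Local Notation RR := Rdefinitions.R.

Lemma normc_ge0 (z : CC) : 0 <= normc z.
Proof. by case: z => a b; exact: sqrtr_ge0. Qed.
Lemma normcE' (z : CC) : `|z| = (normc z)%:C.
Proof. by rewrite normc_def; case: z. Qed.
Lemma normcR (x : RR) : normc (x%:C) = `|x|.
Proof. rewrite /normc /= expr0n /= addr0. by rewrite sqrtr_sqr. Qed.
Lemma normcJ (z : CC) : normc (z^*) = normc z.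
Proof. by case: z => a b; rewrite /normc /= sqrrN. Qed.
Lemma mulJ (z : CC) : z^* * z = (normc z ^+ 2)%:C.
Proof.
case: z => a b; rewrite /normc sqr_sqrtr ?addr_ge0 ?sqr_ge0 //.
rewrite /= /GRing.mul /=.
rewrite -complexr0; congr (_ +i* _); ring.
Qed.

Definition xn d (n : Zd d) : RR := 1 + (l1norm n)%:R.
Lemma xn_ge1 d (n : Zd d) : 1 <= xn n.
Proof. by rewrite /xn lerDl ler0n. Qed.
Lemma xnX_ge1 d (n : Zd d) m : 1 <= xn n ^+ m.
Proof. exact/exprn_ege1/xn_ge1. Qed.

Lemma tempE d (f : Zd d -> CC) : tempered f <->
  exists (M : RR) (m : nat), 0 < M /\ forall n, normc (f n) <= M * xn n ^+ m.
Proof.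
rewrite /tempered /xn; split => -[M [m [M0 H]]]; exists M, m; split => // n.
  by have := H n; rewrite normcE' lecR.
by rewrite normcE' lecR.
Qed.

Lemma temp_bound d (f : Zd d -> CC) (c : RR) :
  (forall n, normc (f n) <= c) -> tempered f.
Proof.
move=> H; apply/tempE; exists (`|c| + 1), 0%N; split.
  by rewrite ltr_pwDr // normr_ge0.
move=> n; rewrite expr0 mulr1; apply: (le_trans (H n)).
by rewrite (le_trans (ler_norm c)) // lerDl.
Qed.

Lemma bnd_add (M1 M2 a b u v : RR) : 0 < M1 -> 0 < M2 -> 1 <= a -> 1 <= b ->
  u <= M1 * a -> v <= M2 * b -> u + v <= (M1 + M2) * (a * b).
Proof.
move=> h1 h2 h3 h4 h5 h6.
have a0 : 0 <= a by apply: le_trans h3.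
have b0 : 0 <= b by apply: le_trans h4.
have ha : 0 <= a - 1 by rewrite subr_ge0.
have hb : 0 <= b - 1 by rewrite subr_ge0.
have e1 := mulr_ge0 (mulr_ge0 (ltW h1) a0) hb.
have e2 := mulr_ge0 (mulr_ge0 (ltW h2) b0) ha.
nra.
Qed.

Lemma temp_le d (f g : Zd d -> CC) : tempered g ->
  (forall n, normc (f n) <= 1 + normc (g n)) -> tempered f.
Proof.
move=> /tempE [M [m [M0 H]]] Hf; apply/tempE; exists (1 + M), m; split.
  by rewrite ltr_pwDr.
move=> n; apply: (le_trans (Hf n)).
have h1 := H n; have h2 := xnX_ge1 n m.
move: h1 h2; set X := xn n ^+ m; set Y := normc (g n) => h1 h2; nra.
Qed.

Lemma temp_sumK d (k : nat) (A : nat -> Zd d -> CC) :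
  (forall i, (i < k)%N -> tempered (A i)) ->
  exists (M : RR) (m : nat), 0 < M /\
    forall n, \sum_(i < k) normc (A i n) <= M * xn n ^+ m.
Proof.
elim: k => [|k IH] HA.
  by exists 1, 0%N; split => // n; rewrite big_ord0 expr0 mulr1.
have [M1 [m1 [M10 H1]]] := IH (fun i hi => HA i (ltnW hi)).
have /tempE [M2 [m2 [M20 H2]]] := HA k (ltnSn k).
exists (M1 + M2), (m1 + m2)%N; split; first by rewrite addr_gt0.
move=> n; rewrite big_ord_recr /= exprD.
apply: bnd_add; rewrite ?xnX_ge1 //.
Qed.

Lemma normc_sum (k : nat) (F : 'I_k -> CC) :
  normc (\sum_(i < k) F i) <= \sum_(i < k) normc (F i).
Proof.
apply: (big_ind2 (fun x y => normc x <= y)) => //.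
  by rewrite normc0.
move=> x1 y1 x2 y2 h1 h2; apply: (le_trans (le_normcD _ _)); exact: lerD.
Qed.

Lemma sqrt_le1 (x : RR) : 0 <= x -> Num.sqrt x <= 1 + x.
Proof.
move=> x0; rewrite -{2}(sqr_sqrtr x0); have := sqrtr_ge0 x => ?; nra.
Qed.

Lemma In_nth (T : Type) (x0 : T) (s : seq T) i : (i < size s)%N -> List.In (nth x0 s i) s.
Proof.
elim: s i => [|a s IH] [|i] //= hi; first by left.
by right; apply: IH.
Qed.

Lemma P_sum d (P : (Zd d -> CC) -> Prop) (I : Type) (s : seq I) (H : I -> Zd d -> CC) :
  is_ideal P -> (forall i, P (H i)) -> P (fun n => \sum_(i <- s) H i n).
Proof.
move=> [_ H0 HD _] HH; elim: s => [|a s IH].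
  have -> : (fun n => \sum_(i <- [::]) H i n) = (fun _ => 0) by
    apply: functional_extensionality => n; rewrite big_nil.
  exact: H0.
have -> : (fun n => \sum_(i <- a :: s) H i n) = (fun n => H a n + \sum_(i <- s) H i n) by
  apply: functional_extensionality => n; rewrite big_cons.
exact: HD.
Qed.

Theorem theorem4p1 (d : nat) (P : (Zd d -> CC) -> Prop) :
  is_prime_ideal P -> finitely_generated P ->
  exists nstar : Zd d, forall f : Zd d -> CC, P f <-> (tempered f /\ f nstar = 0).
Proof.
move=> [[Hid H1] Hpr] [gs [Hgs Hgen]].
have Hid' := Hid; case: Hid' => [HT H0 HD HM].
pose chi (z : Zd d) := fun n : Zd d => if n == z then (0 : CC) else 1.
pose e (z : Zd d) := fun n : Zd d => if n == z then (1 : CC) else 0.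
have Tchi z : tempered (chi z).
  apply: (@temp_bound _ _ 1) => n; rewrite /chi; case: eqP => _.
    by rewrite normc0.
  by rewrite normc1.
have Te z : tempered (e z).
  apply: (@temp_bound _ _ 1) => n; rewrite /e; case: eqP => _.
    by rewrite normc1.
  by rewrite normc0.
have Hsum z : P (fun n => e z n + chi z n) -> False.
  move=> H; apply: H1.
  have E : (fun n => e z n + chi z n) = (fun _ => 1).
    apply: functional_extensionality => n.
    by rewrite /e /chi; case: eqP => _; rewrite ?addr0 ?add0r.
  by rewrite -E.
case: (classic (exists z, P (chi z))) => [[z Pz]|Hno].
  exists z => f; split.
    move=> Pf; split; first exact: HT.
    apply/eqP/negP => /negP fz0.
    pose a := fun n : Zd d => if n == z then (f z)^-1 else 0.
    have Ta : tempered a.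
      apply: (@temp_bound _ _ (normc (f z)^-1)) => n; rewrite /a; case: eqP => _ //.
      by rewrite normc0 normc_ge0.
    apply: (Hsum z); apply: HD => //.
    have -> : e z = (fun n => a n * f n).
      apply: functional_extensionality => n; rewrite /e /a; case: eqP => [->|_].
        by rewrite mulVf.
      by rewrite mul0r.
    exact: HM.
  move=> [Tf fz].
  have -> : f = (fun n => f n * chi z n).
    apply: functional_extensionality => n; rewrite /chi; case: eqP => [->|_].
      by rewrite fz mulr0.
    by rewrite mulr1.
  exact: HM.
have Pe z : P (e z).
  have : P (fun n => e z n * chi z n).
    have -> : (fun n => e z n * chi z n) = (fun _ => 0).
      apply: functional_extensionality => n; rewrite /e /chi; case: eqP => _.
        by rewrite mulr0.
      by rewrite mul0r.
    exact: H0.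
  move=> /(Hpr _ _ (Te z) (Tchi z)) [//|Pc]; exfalso; apply: Hno; by exists z.
exfalso.
pose k := size gs.
pose g i := nth (fun _ => 0) gs i.
have Pg i : (i < k)%N -> P (g i) by move=> hi; apply: Hgs; exact: In_nth.
pose r n := \sum_(i < k) normc (g i n) ^+ 2.
have r_ge0 n : 0 <= r n by apply: sumr_ge0 => i _; exact: sqr_ge0.
have gle n (i : 'I_k) : normc (g i n) <= Num.sqrt (r n).
  rewrite -(ger0_norm (normc_ge0 (g i n))) -sqrtr_sqr; apply: ler_wsqrtr.
  rewrite /r (bigD1 i) //= lerDl; apply: sumr_ge0 => j _; exact: sqr_ge0.
have PG : P (fun n => (r n)%:C).
  have -> : (fun n => (r n)%:C) = (fun n => \sum_(i <- index_enum 'I_k) (g i n)^* * g i n).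
    apply: functional_extensionality => n; rewrite /r rmorph_sum.
    by apply: eq_bigr => i _; rewrite mulJ.
  apply: P_sum => // i; apply: HM; last exact: Pg.
  have /tempE [M [m [M0 HMm]]] := HT _ (Pg i (ltn_ord i)).
  by apply/tempE; exists M, m; split => // n; rewrite normcJ.
have TG := HT _ PG.
pose s n := (Num.sqrt (r n))%:C.
pose q n := (Num.sqrt (Num.sqrt (r n)))%:C.
have Ts : tempered s.
  apply: (@temp_le d s _ TG) => n; rewrite /s !normcR ger0_norm ?sqrtr_ge0 //.
  by rewrite ger0_norm //; apply: sqrt_le1.
have Tq : tempered q.
  apply: (@temp_le d q s Ts) => n; rewrite /s /q !normcR ger0_norm ?sqrtr_ge0 //.
  by rewrite ger0_norm ?sqrtr_ge0 //; apply: sqrt_le1; exact: sqrtr_ge0.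
have Ps : P s.
  have : P (fun n => s n * s n).
    have -> : (fun n => s n * s n) = (fun n => (r n)%:C) => //.
    apply: functional_extensionality => n.
    by rewrite /s -rmorphM -expr2 sqr_sqrtr.
  by move=> /(Hpr _ _ Ts Ts) [].
have Pq : P q.
  have : P (fun n => q n * q n).
    have -> : (fun n => q n * q n) = s => //.
    apply: functional_extensionality => n.
    by rewrite /s /q -rmorphM -expr2 sqr_sqrtr // sqrtr_ge0.
  by move=> /(Hpr _ _ Tq Tq) [].
have Key f : P f -> exists (M : RR) (m : nat), 0 < M /\
    forall n, normc (f n) <= M * xn n ^+ m * Num.sqrt (r n).
  move=> /Hgen [as_ [Has [Ta Hf]]].
  have Tai i : (i < k)%N -> tempered (nth (fun _ => 0) as_ i).
    by move=> hi; apply: Ta; apply: In_nth; rewrite Has.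
  have [M [m [M0 HMm]]] := @temp_sumK d k (fun i => nth (fun _ => 0) as_ i) Tai.
  exists M, m; split => // n; rewrite Hf.
  apply: (le_trans (normc_sum _)).
  apply: (@le_trans _ _ (\sum_(i < k) normc (nth (fun _ => 0) as_ i n) * Num.sqrt (r n))).
    apply: ler_sum => i _; rewrite normcM; apply: ler_wpM2l; first exact: normc_ge0.
    exact: gle.
  by rewrite -mulr_suml; apply: ler_wpM2r; [exact: sqrtr_ge0|exact: HMm].
have [M [m [M0 HK]]] := Key _ Pq.
have rpos n : 0 < r n.
  have [M' [m' [M0' HK']]] := Key _ (Pe n).
  have := HK' n; rewrite /e eqxx normc1.
  rewrite lt_def r_ge0 andbT; apply: contraTN => /eqP ->.
  by rewrite sqrtr0 mulr0 ler10.
pose w n := ((r n)^-1)%:C.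
have Tw : tempered w.
  apply/tempE; exists (M ^+ 4), (m * 4)%N; split; first exact: exprn_gt0.
  move=> n; rewrite /w normcR ger0_norm; last by rewrite invr_ge0 ltW.
  set K := M * xn n ^+ m.
  have -> : M ^+ 4 * xn n ^+ (m * 4) = K ^+ 4 by rewrite exprMn exprM.
  set t := Num.sqrt (Num.sqrt (r n)).
  have t0 : 0 < t.
    rewrite lt_def sqrtr_ge0 andbT sqrtr_eq0 -ltNge lt_def sqrtr_ge0 andbT.
    by rewrite sqrtr_eq0 -ltNge rpos.
  have rt : r n = t ^+ 4.
    by rewrite /t (_ : 4%N = (2 * 2)%N) // exprM !sqr_sqrtr ?sqrtr_ge0 ?r_ge0.
  have ht : t <= K * t ^+ 2.
    have := HK n; rewrite /q normcR ger0_norm ?sqrtr_ge0 // -/t.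
    by rewrite -(sqr_sqrtr (sqrtr_ge0 (r n))) -/t.
  have Kt : 1 <= K * t.
    by rewrite -(ler_pM2r t0) mul1r -mulrA -expr2.
  rewrite -(ler_pM2r (rpos n)) mulVf ?gt_eqF //.
  by rewrite rt -exprMn; apply: exprn_ege1.
apply: H1.
have -> : (fun _ : Zd d => (1 : CC)) = (fun n => w n * (r n)%:C).
  apply: functional_extensionality => n.
  by rewrite /w -rmorphM mulVf ?gt_eqF // rmorph1.
exact: HM.
Qed.
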